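(* Define $i:({}^{\star}\mathbb{R}_{\mathcal F})_F\to\mathbb{R}_{\mathcal F}^{\circ}$ by $i([x]_{\mathcal F})=[x]_o$ and $j:{}^{\star}\mathbb{R}_{\mathcal F}\to{}^{\star}\mathbb{R}$ by $j([x]_{\mathcal F})=[x]_{\mathcal U}$. Then $i$ and $j$ are well-defined, surjective ring homomorphisms (hence non-trivial), and order-preserving in the sense that $[x]_{\mathcal F}\le_{\mathcal F}[y]_{\mathcal F}$ implies $i([x]_{\mathcal F})\le_o i([y]_{\mathcal F})$ (when both sides are defined) and $j([x]_{\mathcal F})\le_{\mathcal U} j([y]_{\mathcal F})$.
   Context: $\mathcal F$ is the Fréchet filter of cofinite subsets of $\mathbb{N}$, $\mathcal U\supseteq\mathcal F$ is a nonprincipal ultrafilter on $\mathbb{N}$. Henle's ring ${}^{\star}\mathbb{R}_{\mathcal F}=\mathbb{R}^{\mathbb{N}}/\mathcal F$: classes $[x]_{\mathcal F}$ of real sequences identified when equal on a set in $\mathcal F$, pointwise operations, $[x]_{\mathcal F}\le_{\mathcal F}[y]_{\mathcal F}$ iff $\{n:x_n\le y_n\}\in\mathcal F$. The hyperreal field ${}^{\star}\mathbb{R}=\mathbb{R}^{\mathbb{N}}/\mathcal U$ analogously with $\mathcal U$ in place of $\mathcal F$. $({}^{\star}\mathbb{R}_{\mathcal F})_F$ denotes the subring of finite elements of ${}^{\star}\mathbb{R}_{\mathcal F}$, i.e. those $r$ with $-n\le r\le n$ for some $n\in\mathbb{N}$ (equivalently classes of eventually bounded sequences). With $\mathbb{R}^{\mathbb{N}}_B$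 the ring of bounded real sequences and $o=\{f:\lim_{n\to\infty}nf(n)=0\}$, $\mathbb{R}_{\mathcal F}^{\circ}=\mathbb{R}^{\mathbb{N}}_B/o$ with pointwise operations and order $[x]_o\le_o[y]_o$ iff there exist $z\in o$ and $\bar n$ with $x_n\le y_n+z_n$ for all $n\ge\bar n$. *)

(* Defs.v *)
From Stdlib Require Import Reals Lra ClassicalEpsilon.
Open Scope R_scope.

Definition seqR := nat -> R.

Definition Quot (T : Type) (E : T -> T -> Prop) : Type :=
  {C : T -> Prop | exists x, C = E x}.

Definition cls {T : Type} (E : T -> T -> Prop) (x : T) : Quot T E :=
  exist _ (E x) (ex_intro _ x eq_refl).

Definition rep {T : Type} {E : T -> T -> Prop} (a : Quot T E) : T :=
  proj1_sig (constructive_indefinite_description _ (proj2_sig a)).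

Definition lift2 {T : Type} (E : T -> T -> Prop) (f : T -> T -> T)
  (a b : Quot T E) : Quot T E := cls E (f (rep a) (rep b)).

Definition leQ {T : Type} (E : T -> T -> Prop) (L : T -> T -> Prop)
  (a b : Quot T E) : Prop :=
  exists x y, a = cls E x /\ b = cls E y /\ L x y.

Definition sadd (x y : seqR) : seqR := fun n => x n + y n.
Definition smul (x y : seqR) : seqR := fun n => x n * y n.
Definition scst (c : R) : seqR := fun _ => c.

Definition cofinite (A : nat -> Prop) : Prop :=
  exists N : nat, forall n, ~ A n -> (n < N)%nat.

Definition is_ultrafilter (U : (nat -> Prop) -> Prop) : Prop :=
  (forall A B : nat -> Prop, U A -> (forall n, A n -> B n) -> U B) /\
  (forall A B : nat -> Prop, U A -> U B -> U (fun n => A n /\ B n)) /\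
  ~ U (fun _ => False) /\
  (forall A : nat -> Prop, U A \/ U (fun n => ~ A n)).

Definition nonprincipal (U : (nat -> Prop) -> Prop) : Prop :=
  forall k : nat, ~ U (fun n => n = k).

Definition eqF (x y : seqR) : Prop := cofinite (fun n => x n = y n).
Definition leF (x y : seqR) : Prop := cofinite (fun n => x n <= y n).
Definition RF := Quot seqR eqF.
Definition clsF (x : seqR) : RF := cls eqF x.
Definition addF : RF -> RF -> RF := lift2 eqF sadd.
Definition mulF : RF -> RF -> RF := lift2 eqF smul.
Definition oneF : RF := clsF (scst 1).
Definition leRF : RF -> RF -> Prop := leQ eqF leF.

Definition finiteF (r : RF) : Prop :=
  exists n : nat, leRF (clsF (scst (- INR n))) r /\ leRF r (clsF (scst (INR n))).

Definition eqU (U : (nat -> Prop) -> Prop) (x y : seqR) : Prop :=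
  U (fun n => x n = y n).
Definition leU (U : (nat -> Prop) -> Prop) (x y : seqR) : Prop :=
  U (fun n => x n <= y n).
Definition RU U := Quot seqR (eqU U).
Definition clsU U (x : seqR) : RU U := cls (eqU U) x.
Definition addU U : RU U -> RU U -> RU U := lift2 (eqU U) sadd.
Definition mulU U : RU U -> RU U -> RU U := lift2 (eqU U) smul.
Definition oneU U : RU U := clsU U (scst 1).
Definition leRU U : RU U -> RU U -> Prop := leQ (eqU U) (leU U).

Definition bounded (x : seqR) : Prop := exists M : R, forall n, Rabs (x n) <= M.
Definition BSeq := {x : seqR | bounded x}.

Lemma bounded_add x y : bounded x -> bounded y -> bounded (sadd x y).
Proof.
  intros [M HM] [K HK]; exists (M + K); intro n; unfold sadd.
  eapply Rle_trans; [apply Rabs_triang|]. specialize (HM n); specialize (HK n); lra.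
Qed.

Lemma bounded_mul x y : bounded x -> bounded y -> bounded (smul x y).
Proof.
  intros [M HM] [K HK]; exists (M * K); intro n; unfold smul.
  rewrite Rabs_mult. apply Rmult_le_compat; try apply Rabs_pos; auto.
Qed.

Lemma bounded_cst c : bounded (scst c).
Proof. exists (Rabs c); intro n; unfold scst; lra. Qed.

Definition baddB (x y : BSeq) : BSeq :=
  exist _ (sadd (proj1_sig x) (proj1_sig y))
    (bounded_add _ _ (proj2_sig x) (proj2_sig y)).
Definition bmulB (x y : BSeq) : BSeq :=
  exist _ (smul (proj1_sig x) (proj1_sig y))
    (bounded_mul _ _ (proj2_sig x) (proj2_sig y)).
Definition bcst (c : R) : BSeq := exist _ (scst c) (bounded_cst c).

Definition in_o (f : seqR) : Prop := Un_cv (fun n => INR n * f n) 0.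

Definition eqo (x y : BSeq) : Prop :=
  in_o (fun n => proj1_sig x n - proj1_sig y n).
Definition leo (x y : BSeq) : Prop :=
  exists z : seqR, in_o z /\
    exists N : nat, forall n, (N <= n)%nat -> proj1_sig x n <= proj1_sig y n + z n.
Definition Ro := Quot BSeq eqo.
Definition clso (x : BSeq) : Ro := cls eqo x.
Definition addo : Ro -> Ro -> Ro := lift2 eqo baddB.
Definition mulo : Ro -> Ro -> Ro := lift2 eqo bmulB.
Definition oneo : Ro := clso (bcst 1).
Definition leRo : Ro -> Ro -> Prop := leQ eqo leo.

(** i : ( *R_F)_F -> R°_F, [x]_F |-> [x]_o, computed on a bounded
    representative of the class (one exists when the class is finite);
    outside the finite elements the value is irrelevant. *)
Definition iF (a : RF) : Ro :=
  clso (epsilon (inhabits (bcst 0)) (fun y : BSeq => eqF (rep a) (proj1_sig y))).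

Definition jF U (a : RF) : RU U := clsU U (rep a).

(* Main.v *)
Require Import Defs.
From Stdlib Require Import Reals.
From Stdlib Require Import Arith Lra Lia Classical ProofIrrelevance FunctionalExtensionality PropExtensionality ClassicalEpsilon.
Open Scope R_scope.

Definition Eqv {T} (E : T -> T -> Prop) :=
  (forall x, E x x) /\ (forall x y, E x y -> E y x) /\ (forall x y z, E x y -> E y z -> E x z).

Lemma exist_eq_gen {T} (E : T -> T -> Prop) (P Q : T -> Prop)
  (p : exists x, P = E x) (q : exists x, Q = E x) :
  P = Q -> exist (fun C => exists x, C = E x) P p = exist _ Q q.
Proof. intros ->. f_equal. apply proof_irrelevance. Qed.

Lemma cls_eq {T} (E : T -> T -> Prop) x y : Eqv E -> E x y -> cls E x = cls E y.
Proof.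
  intros [R [S Tr]] H. unfold cls. apply exist_eq_gen.
  apply functional_extensionality; intro z. apply propositional_extensionality.
  split; intro; eauto.
Qed.

Lemma cls_inj {T} (E : T -> T -> Prop) x y : Eqv E -> cls E x = cls E y -> E x y.
Proof.
  intros [R [S Tr]] H. apply (f_equal (@proj1_sig _ _)) in H. simpl in H.
  rewrite H. apply R.
Qed.

Lemma rep_spec {T} (E : T -> T -> Prop) (a : Quot T E) : proj1_sig a = E (rep a).
Proof.
  unfold rep. destruct (constructive_indefinite_description _ _). simpl. exact e.
Qed.

Lemma rep_cls {T} (E : T -> T -> Prop) x : Eqv E -> E (rep (cls E x)) x.
Proof.
  intros [R [S Tr]]. pose proof (rep_spec E (cls E x)) as H. simpl in H.
  apply S. rewrite H. apply R.
Qed.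

Lemma cls_rep {T} (E : T -> T -> Prop) (a : Quot T E) : Eqv E -> cls E (rep a) = a.
Proof.
  intros HE. pose proof (rep_spec E a) as H. destruct a as [C p]. simpl in H.
  unfold cls. apply exist_eq_gen. auto.
Qed.

Definition ev (A : nat -> Prop) := exists N, forall n, (N <= n)%nat -> A n.

Lemma cof_ev A : cofinite A <-> ev A.
Proof.
  split.
  - intros [N H]. exists N. intros n Hn. apply NNPP. intro C. apply H in C. lia.
  - intros [N H]. exists N. intros n Hn. destruct (le_lt_dec N n); auto.
    exfalso; apply Hn, H; auto.
Qed.

Lemma ev_and (A B : nat -> Prop) : ev A -> ev B -> ev (fun n => A n /\ B n).
Proof.
  intros [N1 H1] [N2 H2]. exists (Nat.max N1 N2). intros n Hn. split.
  apply H1; lia. apply H2; lia.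
Qed.

Lemma ev_mono (A B : nat -> Prop) : ev A -> (forall n, A n -> B n) -> ev B.
Proof. intros [N H] HI. exists N. auto. Qed.

Lemma eqF_ev x y : eqF x y <-> ev (fun n => x n = y n).
Proof. apply cof_ev. Qed.
Lemma leF_ev x y : leF x y <-> ev (fun n => x n <= y n).
Proof. apply cof_ev. Qed.

Lemma Eqv_eqF : Eqv eqF.
Proof.
  split; [|split]; intros; rewrite ?eqF_ev in *.
  - exists 0%nat. auto.
  - eapply ev_mono; eauto.
  - eapply ev_mono. apply (ev_and _ _ H H0). simpl. intros n [A B]; congruence.
Qed.


Lemma U_full U : is_ultrafilter U -> U (fun _ => True).
Proof.
  intros [Hm [Hi [H0 Hc]]]. destruct (Hc (fun _ => True)) as [H|H]; auto.
  exfalso. apply H0. eapply Hm; [exact H|]. simpl. tauto.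
Qed.

Lemma Eqv_eqU U : is_ultrafilter U -> Eqv (eqU U).
Proof.
  intros HU. pose proof (U_full U HU). destruct HU as [Hm [Hi _]].
  unfold eqU. split; [|split]; intros.
  - eapply Hm; [exact H|]. simpl. auto.
  - eapply Hm; [exact H0|]. simpl. auto.
  - eapply Hm. apply (Hi _ _ H0 H1). simpl. intros n [A B]; congruence.
Qed.

Lemma in_o_ext (f g : seqR) : (forall n, f n = g n) -> in_o f -> in_o g.
Proof.
  intros E H eps He. destruct (H eps He) as [N HN]. exists N. intros n Hn.
  rewrite <- E. auto.
Qed.

Lemma in_o_ev0 (f : seqR) : ev (fun n => f n = 0) -> in_o f.
Proof.
  intros [N H] eps He. exists N. intros n Hn. rewrite H by lia.
  unfold R_dist. rewrite Rmult_0_r, Rminus_0_r, Rabs_R0. auto.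
Qed.

Lemma in_o_add (f g : seqR) : in_o f -> in_o g -> in_o (fun n => f n + g n).
Proof.
  intros Hf Hg. unfold in_o. pose proof (CV_plus _ _ _ _ Hf Hg) as H.
  rewrite Rplus_0_r in H. revert H. apply Un_cv_ext.
  intros n; simpl; ring.
Qed.

Lemma in_o_bmul (b f : seqR) : Defs.bounded b -> in_o f -> in_o (fun n => b n * f n).
Proof.
  intros [M HM] Hf eps He.
  assert (HM' : 0 < Rabs M + 1) by (pose proof (Rabs_pos M); lra).
  destruct (Hf (eps / (Rabs M + 1))) as [N HN].
  { apply Rdiv_lt_0_compat; lra. }
  exists N. intros n Hn. specialize (HN n Hn). unfold R_dist in *.
  rewrite Rminus_0_r in *.
  replace (INR n * (b n * f n)) with (b n * (INR n * f n)) by ring.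
  rewrite Rabs_mult.
  apply Rle_lt_trans with ((Rabs M + 1) * Rabs (INR n * f n)).
  - apply Rmult_le_compat_r. apply Rabs_pos. specialize (HM n).
    pose proof (Rle_abs M). lra.
  - apply Rmult_lt_compat_l with (r := Rabs M + 1) in HN; auto.
    replace ((Rabs M + 1) * (eps / (Rabs M + 1))) with eps in HN by (field; lra).
    exact HN.
Qed.

Lemma in_o_opp (f : seqR) : in_o f -> in_o (fun n => - f n).
Proof.
  intros H. eapply in_o_ext. 2: apply (in_o_bmul (scst (-1)) f (bounded_cst _) H).
  intros; unfold scst; ring.
Qed.

Lemma Eqv_eqo : Eqv eqo.
Proof.
  unfold eqo. split; [|split]; intros.
  - apply in_o_ev0. exists 0%nat. intros; ring.
  - eapply in_o_ext. 2: apply (in_o_opp _ H). intros; simpl; ring.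
  - eapply in_o_ext. 2: apply (in_o_add _ _ H H0). intros; simpl; ring.
Qed.

Lemma eqF_eqo (x y : BSeq) : eqF (proj1_sig x) (proj1_sig y) -> eqo x y.
Proof.
  intro H. apply eqF_ev in H. apply in_o_ev0. eapply ev_mono; eauto.
  simpl. intros n ->. ring.
Qed.

Lemma eqo_add (a b c d : BSeq) : eqo a c -> eqo b d -> eqo (baddB a b) (baddB c d).
Proof.
  unfold eqo; intros H1 H2. eapply in_o_ext. 2: apply (in_o_add _ _ H1 H2).
  intros; simpl; unfold sadd; ring.
Qed.

Lemma eqo_mul (a b c d : BSeq) : eqo a c -> eqo b d -> eqo (bmulB a b) (bmulB c d).
Proof.
  unfold eqo; intros H1 H2.
  pose proof (in_o_bmul _ _ (proj2_sig a) H2) as A.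
  pose proof (in_o_bmul _ _ (proj2_sig d) H1) as B.
  eapply in_o_ext. 2: apply (in_o_add _ _ A B).
  intros; simpl; unfold smul; ring.
Qed.

Lemma eqF_op (f : R -> R -> R) x y x' y' : eqF x x' -> eqF y y' ->
  eqF (fun n => f (x n) (y n)) (fun n => f (x' n) (y' n)).
Proof.
  rewrite !eqF_ev. intros A B. eapply ev_mono. apply (ev_and _ _ A B).
  simpl. intros n [-> ->]. auto.
Qed.

Lemma eqU_op U (f : R -> R -> R) x y x' y' : is_ultrafilter U -> eqU U x x' -> eqU U y y' ->
  eqU U (fun n => f (x n) (y n)) (fun n => f (x' n) (y' n)).
Proof.
  intros [Hm [Hi _]] A B. unfold eqU in *. eapply Hm. apply (Hi _ _ A B).
  simpl. intros n [-> ->]. auto.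
Qed.

Definition Fin' (a : RF) := exists y : BSeq, eqF (rep a) (proj1_sig y).

Lemma ev_bound_bseq x M : ev (fun n => Rabs (x n) <= M) -> exists y : BSeq, eqF x (proj1_sig y).
Proof.
  intros [N H].
  assert (Hb : Defs.bounded (fun k => if Nat.ltb k N then 0 else x k)).
  { exists (Rabs M). intro k. destruct (Nat.ltb_spec k N).
    - rewrite Rabs_R0. apply Rabs_pos.
    - pose proof (H k H0). pose proof (Rle_abs M). lra. }
  exists (exist _ _ Hb). apply eqF_ev. exists N. intros n Hn. simpl.
  destruct (Nat.ltb_spec n N); auto; lia.
Qed.

Lemma bounded_finite x : Defs.bounded x -> finiteF (clsF x).
Proof.
  intros [M HM]. destruct (INR_archimed 1 M) as [n Hn]; [lra|].
  rewrite Rmult_1_r in Hn.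
  exists n. split; [exists (scst (- INR n)), x | exists x, (scst (INR n))];
  (split; [reflexivity | split; [reflexivity|]]);
  apply leF_ev; exists 0%nat; intros k _; unfold scst; specialize (HM k);
  revert HM; unfold Rabs; destruct (Rcase_abs (x k)); lra.
Qed.

Lemma Fin'_finite a : Fin' a -> finiteF a.
Proof.
  intros [y Hy]. replace a with (clsF (proj1_sig y)).
  - apply bounded_finite, (proj2_sig y).
  - rewrite <- (cls_rep eqF a Eqv_eqF). apply cls_eq. apply Eqv_eqF.
    destruct Eqv_eqF as [_ [S _]]. auto.
Qed.

Lemma rep_clsF x : eqF (rep (clsF x)) x.
Proof. apply rep_cls, Eqv_eqF. Qed.

Lemma eqF_trans x y z : eqF x y -> eqF y z -> eqF x z.
Proof. apply Eqv_eqF. Qed.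
Lemma eqF_sym x y : eqF x y -> eqF y x.
Proof. apply Eqv_eqF. Qed.

Lemma clsF_eq_inv x a : clsF x = a -> eqF (rep a) x.
Proof. intros <-. apply rep_clsF. Qed.

Lemma finite_Fin' a : finiteF a -> Fin' a.
Proof.
  intros [n [[x1 [y1 [E1 [E2 L1]]]] [x2 [y2 [E3 [E4 L2]]]]]].
  apply cls_inj in E1; [|apply Eqv_eqF].
  apply cls_inj in E4; [|apply Eqv_eqF].
  apply eqF_sym in E1.
  pose proof (clsF_eq_inv _ _ (eq_sym E2)) as A1.
  pose proof (clsF_eq_inv _ _ (eq_sym E3)) as A2.
  apply (ev_bound_bseq _ (INR n)).
  rewrite eqF_ev in *. rewrite leF_ev in *.
  pose proof (ev_and _ _ (ev_and _ _ E1 E4) (ev_and _ _ (ev_and _ _ A1 A2) (ev_and _ _ L1 L2))) as H.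
  eapply ev_mono; eauto. simpl. unfold scst. intros k [[B1 B2] [[B3 B4] [B5 B6]]].
  unfold Rabs; destruct (Rcase_abs (rep a k)); lra.
Qed.

Lemma iF_char a (y : BSeq) : eqF (rep a) (proj1_sig y) -> iF a = clso y.
Proof.
  intros H. unfold iF.
  pose proof (epsilon_spec (inhabits (bcst 0)) (fun y : BSeq => eqF (rep a) (proj1_sig y))
    (ex_intro _ y H)) as H'.
  apply cls_eq; [apply Eqv_eqo|]. apply eqF_eqo.
  eapply eqF_trans; [apply eqF_sym|]; [exact H'|exact H].
Qed.

Lemma rep_clso x : eqo (rep (clso x)) x.
Proof. apply rep_cls, Eqv_eqo. Qed.

Theorem mainTheorem5 (U : (nat -> Prop) -> Prop)
  (hU : is_ultrafilter U) (hnp : nonprincipal U)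
  (hF : forall A, cofinite A -> U A) :
  (* well-definedness: i([x]_F) = [x]_o and j([x]_F) = [x]_U *)
  (forall x y : BSeq, eqF (proj1_sig x) (proj1_sig y) -> eqo x y) /\
  (forall x : BSeq, finiteF (clsF (proj1_sig x)) /\ iF (clsF (proj1_sig x)) = clso x) /\
  (forall x y : seqR, eqF x y -> eqU U x y) /\
  (forall x : seqR, jF U (clsF x) = clsU U x) /\
  (* i is a ring homomorphism on the finite elements *)
  (forall a b, finiteF a -> finiteF b ->
     finiteF (addF a b) /\ finiteF (mulF a b) /\
     iF (addF a b) = addo (iF a) (iF b) /\ iF (mulF a b) = mulo (iF a) (iF b)) /\
  finiteF oneF /\ iF oneF = oneo /\
  (* j is a ring homomorphism *)
  (forall a b, jF U (addF a b) = addU U (jF U a) (jF U b) /\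
               jF U (mulF a b) = mulU U (jF U a) (jF U b)) /\
  jF U oneF = oneU U /\
  (* surjectivity *)
  (forall c : Ro, exists a, finiteF a /\ iF a = c) /\
  (forall c : RU U, exists a, jF U a = c) /\
  (* order preservation *)
  (forall a b, finiteF a -> finiteF b -> leRF a b -> leRo (iF a) (iF b)) /\
  (forall a b, leRF a b -> leRU U (jF U a) (jF U b)).
Proof.
  pose proof (Eqv_eqU U hU) as EU.
  assert (FU : forall x y, eqF x y -> eqU U x y) by (intros; apply hF; auto).
  assert (I2 : forall x : BSeq, finiteF (clsF (proj1_sig x)) /\ iF (clsF (proj1_sig x)) = clso x).
  { intros x. split. apply bounded_finite, (proj2_sig x). apply iF_char, rep_clsF. }
  assert (J4 : forall x : seqR, jF U (clsF x) = clsU U x).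
  { intros x. unfold jF, clsU. apply cls_eq; auto. apply FU, rep_clsF. }
  split; [exact eqF_eqo|].
  split; [exact I2|].
  split; [exact FU|].
  split; [exact J4|].
  split.
  { intros a b Ha Hb. apply finite_Fin' in Ha as [ya Ha]. apply finite_Fin' in Hb as [yb Hb].
    assert (HA : eqF (rep (addF a b)) (proj1_sig (baddB ya yb))).
    { unfold addF, lift2. eapply eqF_trans. apply rep_cls, Eqv_eqF.
      simpl. apply (eqF_op Rplus); auto. }
    assert (HM : eqF (rep (mulF a b)) (proj1_sig (bmulB ya yb))).
    { unfold mulF, lift2. eapply eqF_trans. apply rep_cls, Eqv_eqF.
      simpl. apply (eqF_op Rmult); auto. }
    split; [apply Fin'_finite; eexists; eauto|].
    split; [apply Fin'_finite; eexists; eauto|].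
    rewrite (iF_char _ _ HA), (iF_char _ _ HM), (iF_char _ _ Ha), (iF_char _ _ Hb).
    split; unfold addo, mulo, lift2; apply cls_eq; try apply Eqv_eqo;
      destruct Eqv_eqo as [_ [S _]].
    - apply eqo_add; exact (rep_clso _).
    - apply eqo_mul; exact (rep_clso _). }
  split; [apply (I2 (bcst 1))|].
  split; [apply (I2 (bcst 1))|].
  split.
  { intros a b. unfold jF, addF, mulF, addU, mulU, lift2, clsU.
    split; apply cls_eq; auto.
    - pose proof EU as [_ [Sy Tr]]. eapply Tr. apply FU, rep_cls, Eqv_eqF.
      apply (eqU_op U Rplus); auto; apply Sy; apply (rep_cls (eqU U)); exact EU.
    - pose proof EU as [_ [Sy Tr]]. eapply Tr. apply FU, rep_cls, Eqv_eqF.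
      apply (eqU_op U Rmult); auto; apply Sy; apply (rep_cls (eqU U)); exact EU. }
  split; [apply J4|].
  split.
  { intros c. exists (clsF (proj1_sig (rep c))). destruct (I2 (rep c)) as [A B].
    split; auto. rewrite B. apply cls_rep, Eqv_eqo. }
  split.
  { intros c. exists (clsF (rep c)). rewrite J4. apply cls_rep; auto. }
  split.
  { intros a b Ha Hb [x [y [Ex [Ey L]]]].
    apply finite_Fin' in Ha as [ya Ha]. apply finite_Fin' in Hb as [yb Hb].
    rewrite (iF_char _ _ Ha), (iF_char _ _ Hb).
    exists ya, yb. split; auto. split; auto.
    exists (fun _ => 0). split. { apply in_o_ev0. exists 0%nat. auto. }
    apply eq_sym, clsF_eq_inv in Ex. apply eq_sym, clsF_eq_inv in Ey. subst.
    rewrite eqF_ev in *. rewrite leF_ev in L.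
    destruct (ev_and _ _ (ev_and _ _ Ha Hb) (ev_and _ _ (ev_and _ _ Ex Ey) L)) as [N HN].
    exists N. intros n Hn. destruct (HN n Hn) as [[A B] [[C D] E]]. lra. }
  { intros a b [x [y [Ex [Ey L]]]]. exists (rep a), (rep b). unfold jF.
    split; auto. split; auto. apply hF.
    apply eq_sym, clsF_eq_inv in Ex. apply eq_sym, clsF_eq_inv in Ey. subst.
    rewrite eqF_ev in *. rewrite leF_ev in L. apply cof_ev.
    eapply ev_mono. apply (ev_and _ _ (ev_and _ _ Ex Ey) L).
    simpl. intros n [[A B] C]. lra. }
Qed.
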